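(* Let $\mathcal{U}\subseteq\mathbb{R}^n$ be a domain and $F=u\,\phi(r,s)$ a spherically symmetric Finsler metric on $\mathcal{U}$, where $u=|y|$, $r=|x|$, $s=\langle x,y\rangle/|y|$ and $\phi$ is smooth. Then the Cartan torsion of $F$ can be written as $$C_{ijk}=\frac{\mathcal{P}}{n+1}\big\{h_{ij}I_k+h_{jk}I_i+h_{ki}I_j\big\}+\frac{\mathcal{Q}}{\|\mathbf{I}\|^2}I_iI_jI_k,$$ where $$\mathcal{P}=\frac{(n+1)\big[(\phi-s\phi_s)\phi_s-s\phi\phi_{ss}\big]\big[\phi-s\phi_s+(r^2-s^2)\phi_{ss}\big]}{(n+1)\big[(\phi-s\phi_s)\phi_s-s\phi\phi_{ss}\big]\big[\phi-s\phi_s+(r^2-s^2)\phi_{ss}\big]+(r^2-s^2)\big[(\phi-s\phi_s)\phi_{sss}+3s\phi_{ss}^2\big]\phi},$$ $$\mathcal{Q}=\frac{(r^2-s^2)\big[(\phi-s\phi_s)\phi_{sss}+3s\phi_{ss}^2\big]\phi^2}{(n+1)\big[(\phi-s\phi_s)\phi_s-s\phi\phi_{ss}\big]\big[\phi-s\phi_s+(r^2-s^2)\phi_{ss}\big]\phi+(r^2-s^2)\big[(\phi-s\phi_s)\phi_{sss}+3s\phi_{ss}^2\big]\phi^2}.$$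
   Context: Here $|\cdot|$, $\langle\cdot,\cdot\rangle$ are the Euclidean norm and inner product; subscripts $s$ denote partial derivatives in $s$. For a Finsler metric $F$: $g_{ij}=\tfrac12(F^2)_{y^iy^j}$, $(g^{ij})$ its inverse, $C_{ijk}=\tfrac12\partial g_{ij}/\partial y^k$ the Cartan torsion, $I_i=g^{jk}C_{ijk}$ the mean Cartan torsion, $\|\mathbf{I}\|^2=g^{ij}I_iI_j$, and $h_{ij}=g_{ij}-F_{y^i}F_{y^j}$ the angular metric. *)

(* Defs.v *)
From HB Require Import structures.
From mathcomp Require Import all_boot all_order all_algebra.
From mathcomp Require Import all_classical all_reals all_analysis.
Set Implicit Arguments. Unset Strict Implicit. Unset Printing Implicit Defensive.
Import Order.TTheory GRing.Theory Num.Theory.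
Import numFieldNormedType.Exports.
Local Open Scope classical_set_scope.
Local Open Scope ring_scope.

Section Defs.
Variable R : realType.

Fixpoint Dseq {V : normedModType R} (vs : seq V) (f : V -> R) : V -> R :=
  match vs with
  | [::] => f
  | v :: vs' => fun a => 'D_v (Dseq vs' f) a
  end.

Definition smooth_on {V : normedModType R} (W : set V) (f : V -> R) : Prop :=
  forall (vs : seq V) (a : V), W a -> differentiable (Dseq vs f) a.

Variable n : nat.

Definition edot (x y : 'rV[R]_n) : R := \sum_(i < n) x 0 i * y 0 i.
Definition enorm (x : 'rV[R]_n) : R := Num.sqrt (edot x x).

Definition ebasis (i : 'I_n) : 'rV[R]_n := \row_(j < n) (i == j)%:R.

Definition pd (f : 'rV[R]_n -> R) (i : 'I_n) (y : 'rV[R]_n) : R :=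
  'D_(ebasis i) f y.

Definition sph_metric (phi : R * R -> R) (x y : 'rV[R]_n) : R :=
  enorm y * phi (enorm x, edot x y / enorm y).

Section FinslerQuantities.
Variable F : 'rV[R]_n -> 'rV[R]_n -> R.

Definition fund (x y : 'rV[R]_n) (i j : 'I_n) : R :=
  2^-1 * pd (fun z => pd (fun w => F x w ^+ 2) i z) j y.

Definition cartan (x y : 'rV[R]_n) (i j k : 'I_n) : R :=
  2^-1 * pd (fun z => fund x z i j) k y.

Definition fund_inv (x y : 'rV[R]_n) : 'M[R]_n :=
  invmx (\matrix_(i < n, j < n) fund x y i j).

Definition mean_cartan (x y : 'rV[R]_n) (i : 'I_n) : R :=
  \sum_(j < n) \sum_(k < n) fund_inv x y j k * cartan x y i j k.

Definition mean_cartan_norm2 (x y : 'rV[R]_n) : R :=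
  \sum_(i < n) \sum_(j < n)
     fund_inv x y i j * mean_cartan x y i * mean_cartan x y j.

Definition angular (x y : 'rV[R]_n) (i j : 'I_n) : R :=
  fund x y i j - pd (F x) i y * pd (F x) j y.

Definition finsler_on (U : set 'rV[R]_n) : Prop :=
  smooth_on [set p : 'rV[R]_n * 'rV[R]_n | U p.1 /\ p.2 != 0]
            (fun p => F p.1 p.2)
  /\ (forall x y, U x -> y != 0 -> 0 < F x y)
  /\ (forall x y (l : R), U x -> 0 < l -> F x (l *: y) = l * F x y)
  /\ (forall x y (v : 'rV[R]_n), U x -> y != 0 -> v != 0 ->
        0 < \sum_(i < n) \sum_(j < n) fund x y i j * v 0 i * v 0 j).

End FinslerQuantities.

Definition phi_s (phi : R * R -> R) (p : R * R) : R := 'D_((0 : R), (1 : R)) phi p.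
Definition phi_ss (phi : R * R -> R) (p : R * R) : R :=
  'D_((0 : R), (1 : R)) (phi_s phi) p.
Definition phi_sss (phi : R * R -> R) (p : R * R) : R :=
  'D_((0 : R), (1 : R)) (phi_ss phi) p.

Definition coefA (phi : R * R -> R) (r s : R) : R :=
  let p := (r, s) in
  (phi p - s * phi_s phi p) * phi_s phi p - s * phi p * phi_ss phi p.
Definition coefB (phi : R * R -> R) (r s : R) : R :=
  let p := (r, s) in
  phi p - s * phi_s phi p + (r ^+ 2 - s ^+ 2) * phi_ss phi p.
Definition coefE (phi : R * R -> R) (r s : R) : R :=
  let p := (r, s) in
  (phi p - s * phi_s phi p) * phi_sss phi p + 3%:R * s * phi_ss phi p ^+ 2.

Definition coefP (phi : R * R -> R) (r s : R) : R :=
  (n.+1%:R * coefA phi r s * coefB phi r s) /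
  (n.+1%:R * coefA phi r s * coefB phi r s
   + (r ^+ 2 - s ^+ 2) * coefE phi r s * phi (r, s)).

Definition coefQ (phi : R * R -> R) (r s : R) : R :=
  ((r ^+ 2 - s ^+ 2) * coefE phi r s * phi (r, s) ^+ 2) /
  (n.+1%:R * coefA phi r s * coefB phi r s * phi (r, s)
   + (r ^+ 2 - s ^+ 2) * coefE phi r s * phi (r, s) ^+ 2).

End Defs.

(* Main.v *)
Require Import Defs.
From HB Require Import structures.
From mathcomp Require Import all_boot all_order all_algebra.
From mathcomp Require Import all_classical all_reals all_analysis.
Import Order.TTheory GRing.Theory Num.Theory.
Import numFieldNormedType.Exports.
Local Open Scope classical_set_scope.
Local Open Scope ring_scope.
From mathcomp Require Import ring lra.

Set Implicit Arguments. Unset Strict Implicit.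

Section Alg.
Variables (R : realType) (n : nat).
Variables (yv xv : 'I_n -> R) (u s p0 p1 p2 p3 : R).
Hypothesis hu : u != 0.
Hypothesis hyy : \sum_(j < n) yv j * yv j = u ^+ 2.
Hypothesis hxy : \sum_(j < n) xv j * yv j = s * u.

Definition dlt (i j : 'I_n) : R := (i == j)%:R.
Definition wa j := xv j - s * (yv j / u).
Definition ma i j := dlt i j - (yv i / u) * (yv j / u).
Definition fa i := p0 * (yv i / u) + p1 * wa i.
Definition Ga i j := fa i * fa j + (u * p0) * (((p0 - s * p1) * ma i j + p2 * (wa i * wa j)) / u).
Definition wwa := \sum_(j < n) wa j * wa j.
Definition Ba := (p0 - s * p1) + wwa * p2.

Lemma sum_dlt (a : 'I_n -> R) i : \sum_(j < n) dlt i j * a j = a i.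
Proof.
rewrite (bigD1 i) //= big1 ?addr0; first by rewrite /dlt eqxx mul1r.
by move=> j ji; rewrite /dlt eq_sym (negbTE ji) mul0r.
Qed.

Lemma sum_wy : \sum_(j < n) wa j * yv j = 0.
Proof.
rewrite (eq_bigr (fun j => xv j * yv j - (s / u) * (yv j * yv j))); last first.
  by move=> j _; rewrite /wa; field.
by rewrite sumrB -mulr_sumr hxy hyy; field.
Qed.

Lemma sum_my i : \sum_(j < n) ma i j * yv j = 0.
Proof.
rewrite (eq_bigr (fun j => dlt i j * yv j - (yv i / u ^+ 2) * (yv j * yv j))); last first.
  by move=> j _; rewrite /ma; field.
by rewrite sumrB -mulr_sumr sum_dlt hyy; field.
Qed.

Lemma sum_mw i : \sum_(j < n) ma i j * wa j = wa i.
Proof.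
rewrite (eq_bigr (fun j => dlt i j * wa j - (yv i / u ^+ 2) * (wa j * yv j))); last first.
  by move=> j _; rewrite /ma; field.
by rewrite sumrB -mulr_sumr sum_dlt sum_wy mulr0 subr0.
Qed.

Lemma sum_fy : \sum_(j < n) fa j * yv j = u * p0.
Proof.
rewrite (eq_bigr (fun j => (p0 / u) * (yv j * yv j) + p1 * (wa j * yv j))); last first.
  by move=> j _; rewrite /fa; field.
by rewrite big_split /= -!mulr_sumr hyy sum_wy; field.
Qed.

Lemma sum_wl : \sum_(j < n) wa j * (yv j / u) = 0.
Proof.
rewrite (eq_bigr (fun j => u^-1 * (wa j * yv j))); last by move=> j _; field.
by rewrite -mulr_sumr sum_wy mulr0.
Qed.

Lemma sum_fw : \sum_(j < n) fa j * wa j = p1 * wwa.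
Proof.
rewrite (eq_bigr (fun j => (p0 / u) * (wa j * yv j) + p1 * (wa j * wa j))); last first.
  by move=> j _; rewrite /fa; field.
by rewrite big_split /= -!mulr_sumr sum_wy /wwa; field.
Qed.

Lemma Gy i : \sum_(j < n) Ga i j * yv j = (u * p0) * fa i.
Proof.
rewrite (eq_bigr (fun j => fa i * (fa j * yv j) + (p0 * (p0 - s * p1)) * (ma i j * yv j)
    + (p0 * p2 * wa i) * (wa j * yv j))); last first.
  by move=> j _; rewrite /Ga; field.
by rewrite !big_split /= -!mulr_sumr sum_fy sum_my sum_wy; ring.
Qed.

Lemma Gw i : \sum_(j < n) Ga i j * wa j = p0 * Ba * wa i + p1 * wwa * fa i.
Proof.
rewrite (eq_bigr (fun j => fa i * (fa j * wa j) + (p0 * (p0 - s * p1)) * (ma i j * wa j)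
    + (p0 * p2 * wa i) * (wa j * wa j))); last first.
  by move=> j _; rewrite /Ga; field.
by rewrite !big_split /= -!mulr_sumr sum_fw sum_mw -/wwa /Ba; ring.
Qed.

Lemma dltC i j : dlt i j = dlt j i.
Proof. by rewrite /dlt eq_sym. Qed.

Lemma maC i j : ma i j = ma j i.
Proof. rewrite /ma dltC; ring. Qed.

Lemma GaC i j : Ga i j = Ga j i.
Proof. rewrite /Ga maC; ring. Qed.

Definition GM : 'M[R]_n := \matrix_(i, j) Ga i j.
Hypothesis HG : GM \in unitmx.
Definition NM := invmx GM.

Lemma GmT : GM^T = GM.
Proof. by apply/matrixP => i j; rewrite !mxE GaC. Qed.

Lemma NmC i j : NM i j = NM j i.
Proof.
have : NM^T = NM by rewrite /NM trmx_inv GmT.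
by move/matrixP => /(_ j i); rewrite mxE.
Qed.

Lemma NG i j : \sum_(k < n) NM i k * Ga k j = dlt i j.
Proof.
have := mulVmx HG; rewrite -/NM => /matrixP /(_ i j).
rewrite !mxE => H; rewrite /dlt -H; apply: eq_bigr => k _; by rewrite /GM mxE.
Qed.

Lemma solveN (a b : 'I_n -> R) : (forall i, \sum_(j < n) Ga i j * a j = b i) ->
  forall i, \sum_(j < n) NM i j * b j = a i.
Proof.
move=> H i.
under eq_bigr do rewrite -H mulr_sumr.
rewrite exchange_big /=.
under eq_bigr do under eq_bigr do rewrite mulrA.
under eq_bigr do rewrite -mulr_suml NG.
exact: sum_dlt.
Qed.

Lemma trNG : \sum_(i < n) \sum_(j < n) NM i j * Ga i j = n%:R.
Proof.
under eq_bigr do under eq_bigr do rewrite GaC.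
under eq_bigr do rewrite NG /dlt eqxx.
by rewrite sumr_const card_ord.
Qed.

Hypothesis hp0 : p0 != 0.
Hypothesis hB : Ba != 0.
Hypothesis hk : p0 - s * p1 != 0.
Ltac fld := field; rewrite ?hu ?hp0 ?hB ?hk //.


Lemma Nf i : \sum_(j < n) NM i j * fa j = yv i / (u * p0).
Proof.
apply: (@solveN (fun i => yv i / (u * p0)) fa) => j.
rewrite (eq_bigr (fun k => (u * p0)^-1 * (Ga j k * yv k))); last by move=> k _; fld.
by rewrite -mulr_sumr Gy; fld.
Qed.

Definition Nwv i := (wa i - (p1 * wwa / (u * p0)) * yv i) / (p0 * Ba).

Lemma Nw i : \sum_(j < n) NM i j * wa j = Nwv i.
Proof.
apply: (@solveN Nwv wa) => j.
rewrite (eq_bigr (fun k => (p0 * Ba)^-1 * (Ga j k * wa k) -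
   (p1 * wwa / (u * p0) / (p0 * Ba)) * (Ga j k * yv k))); last by move=> k _; rewrite /Nwv; fld.
by rewrite sumrB -!mulr_sumr Gw Gy; fld.
Qed.

Definition kap := wwa / (p0 * Ba).

Lemma kapE : \sum_(i < n) \sum_(j < n) NM i j * wa i * wa j = kap.
Proof.
rewrite (eq_bigr (fun i => wa i * \sum_(j < n) NM i j * wa j)); last first.
  by move=> i _; rewrite mulr_sumr; apply: eq_bigr => j _; ring.
under eq_bigr => i _ do rewrite Nw.
rewrite (eq_bigr (fun i => (p0 * Ba)^-1 * (wa i * wa i) - (p1 * wwa / (u * p0) / (p0 * Ba)) * (wa i * yv i)));
  last by move=> i _; rewrite /Nwv; fld.
by rewrite sumrB -!mulr_sumr sum_wy -/wwa /kap; fld.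
Qed.

Lemma Nff : \sum_(i < n) \sum_(j < n) NM i j * fa i * fa j = 1.
Proof.
rewrite (eq_bigr (fun i => fa i * \sum_(j < n) NM i j * fa j)); last first.
  by move=> i _; rewrite mulr_sumr; apply: eq_bigr => j _; ring.
under eq_bigr => i _ do rewrite Nf.
rewrite (eq_bigr (fun i => (u * p0)^-1 * (fa i * yv i))); last by move=> i _; fld.
by rewrite -mulr_sumr sum_fy; fld.
Qed.

Definition Nmm := \sum_(i < n) \sum_(j < n) NM i j * ma i j.

Lemma NmmE : n%:R = 1 + p0 * (p0 - s * p1) * Nmm + p0 * p2 * kap.
Proof.
rewrite -trNG -Nff -kapE /Nmm !mulr_sumr -!big_split /=; apply: eq_bigr => i _.
rewrite !mulr_sumr -!big_split /=; apply: eq_bigr => j _.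
rewrite /Ga; fld.
Qed.

Lemma sum_mNw i : \sum_(j < n) ma i j * Nwv j = wa i / (p0 * Ba).
Proof.
rewrite (eq_bigr (fun j => (p0 * Ba)^-1 * (ma i j * wa j) - (p1 * wwa / (u * p0) / (p0 * Ba)) * (ma i j * yv j)));
  last by move=> j _; rewrite /Nwv; fld.
by rewrite sumrB -!mulr_sumr sum_mw sum_my; fld.
Qed.

Definition gA := (p0 - s * p1) * p1 - s * p0 * p2.
Definition gG := 3 * p1 * p2 + p0 * p3.
Definition Cg i j k := (gA * (ma i j * wa k + ma j k * wa i + ma i k * wa j)
   + gG * (wa i * wa j * wa k)) / (2 * u).
Definition Iv i := \sum_(j < n) \sum_(k < n) NM j k * Cg i j k.
Definition lam := (gA * (2 / (p0 * Ba) + Nmm) + gG * kap) / (2 * u).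

Lemma IvE i : Iv i = lam * wa i.
Proof.
have S1 : \sum_(j < n) \sum_(k < n) NM j k * ma i j * wa k = wa i / (p0 * Ba).
  rewrite (eq_bigr (fun j => ma i j * \sum_(k < n) NM j k * wa k)); last first.
    by move=> j _; rewrite mulr_sumr; apply: eq_bigr => k _; ring.
  under eq_bigr => j _ do rewrite Nw.
  exact: sum_mNw.
have S3 : \sum_(j < n) \sum_(k < n) NM j k * ma i k * wa j = wa i / (p0 * Ba).
  rewrite exchange_big /= -S1; apply: eq_bigr => j _; apply: eq_bigr => k _.
  by rewrite NmC.
rewrite /Iv.
rewrite (eq_bigr (fun j => \sum_(k < n) ((gA / (2 * u)) * (NM j k * ma i j * wa k)
   + (gA * wa i / (2 * u)) * (NM j k * ma j k) + (gA / (2 * u)) * (NM j k * ma i k * wa j)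
   + (gG * wa i / (2 * u)) * (NM j k * wa j * wa k)))); last first.
  by move=> j _; apply: eq_bigr => k _; rewrite /Cg; fld.
under eq_bigr do rewrite !big_split /= -!mulr_sumr.
rewrite !big_split /= -!mulr_sumr S1 S3 kapE -/Nmm /lam.
fld.
Qed.

Definition norm2 := \sum_(i < n) \sum_(j < n) NM i j * Iv i * Iv j.

Lemma norm2E : norm2 = lam ^+ 2 * kap.
Proof.
rewrite /norm2 -kapE mulr_sumr; apply: eq_bigr => i _.
rewrite mulr_sumr; apply: eq_bigr => j _; rewrite !IvE; ring.
Qed.

Definition gE := (p0 - s * p1) * p3 + 3 * s * p2 ^+ 2.
Definition gD := n.+1%:R * gA * Ba + wwa * gE * p0.

Lemma lamE : lam = gD / (2 * u * p0 * Ba * (p0 - s * p1)).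
Proof.
have E : Nmm = (n%:R - 1 - p0 * p2 * kap) / (p0 * (p0 - s * p1)).
  by rewrite NmmE; fld.
rewrite /lam E /kap /gD /gA /gG /gE /Ba -natr1; fld.
Qed.

Definition hh i j := (u * p0) * (((p0 - s * p1) * ma i j + p2 * (wa i * wa j)) / u).

Hypothesis hn2 : norm2 != 0.

Lemma final_id i j k :
  Cg i j k = (n.+1%:R * gA * Ba / gD) / n.+1%:R *
     (hh i j * Iv k + hh j k * Iv i + hh k i * Iv j)
   + (wwa * gE * p0 ^+ 2 / (n.+1%:R * gA * Ba * p0 + wwa * gE * p0 ^+ 2)) / norm2
     * (Iv i * Iv j * Iv k).
Proof.
have hl : lam != 0 by apply: contra hn2; rewrite norm2E => /eqP ->; rewrite expr0n mul0r.
have hka : kap != 0 by apply: contra hn2; rewrite norm2E => /eqP ->; rewrite mulr0.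
have hww : wwa != 0 by apply: contra hka; rewrite /kap => /eqP ->; rewrite mul0r.
have hD : gD != 0.
  apply: contra hl; rewrite lamE => /eqP ->; by rewrite mul0r.
have hn1 : n.+1%:R != 0 :> R by rewrite pnatr_eq0.
have hD2 : n.+1%:R * gA * Ba * p0 + wwa * gE * p0 ^+ 2 != 0.
  have -> : n.+1%:R * gA * Ba * p0 + wwa * gE * p0 ^+ 2 = gD * p0 by rewrite /gD; ring.
  by rewrite mulf_neq0.
rewrite norm2E !IvE /hh [ma k i]maC /Cg.
rewrite lamE /kap.
have e : n.+1%:R = 1 + n%:R :> R by rewrite -add1n natrD.
have hB' := hB.
move: hD hD2 hww hn1 hB'; rewrite /gD /gA /gG /gE /Ba e => hD hD2 hww hn1 hB'.
field; by rewrite hk hB' hp0 hu hww hD hD2 hn1.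
Qed.

Lemma wa0_norm2 : (forall j, wa j = 0) -> norm2 = 0.
Proof.
move=> w0; rewrite /norm2 big1 // => i _; rewrite big1 // => j _.
have Iv0 : forall i, Iv i = 0.
  move=> i'; rewrite /Iv big1 // => j' _; rewrite big1 // => k' _.
  by rewrite /Cg !w0 !(mulr0, mul0r, addr0).
by rewrite !Iv0 !mulr0.
Qed.

Lemma wwa0 : wwa = 0 -> forall j, wa j = 0.
Proof.
move=> /eqP; rewrite /wwa psumr_eq0; last by move=> j _; rewrite -expr2 sqr_ge0.
move=> /allP H j; have := H j (mem_index_enum j); rewrite implyTb mulf_eq0 orbb.
by move/eqP.
Qed.

Lemma QF (z : 'I_n -> R) :
  \sum_(i < n) \sum_(j < n) Ga i j * z i * z j =
  (\sum_(i < n) fa i * z i) ^+ 2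
  + p0 * (p0 - s * p1) * (\sum_(i < n) z i * z i - (\sum_(i < n) (yv i / u) * z i) ^+ 2)
  + p0 * p2 * (\sum_(i < n) wa i * z i) ^+ 2.
Proof.
set Sf := \sum_(i < n) fa i * z i.
set Sl := \sum_(i < n) (yv i / u) * z i.
set Sw := \sum_(i < n) wa i * z i.
have inner : forall i, \sum_(j < n) Ga i j * z i * z j =
   (fa i * z i) * Sf + p0 * (p0 - s * p1) * (z i * z i)
   - p0 * (p0 - s * p1) * ((yv i / u) * z i) * Sl + p0 * p2 * (wa i * z i) * Sw.
  move=> i.
  rewrite (eq_bigr (fun j => (fa i * z i) * (fa j * z j) + (p0 * (p0 - s * p1) * z i) * (dlt i j * z j)
     - (p0 * (p0 - s * p1) * ((yv i / u) * z i)) * ((yv j / u) * z j) + (p0 * p2 * (wa i * z i)) * (wa j * z j))); last first.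
    by move=> j _; rewrite /Ga /ma; field.
  rewrite big_split sumrB big_split /= -!mulr_sumr sum_dlt -/Sf -/Sl -/Sw; ring.
under eq_bigr do rewrite inner.
rewrite (eq_bigr (fun i => Sf * (fa i * z i) + (p0 * (p0 - s * p1)) * (z i * z i)
   - (p0 * (p0 - s * p1) * Sl) * (yv i / u * z i) + (p0 * p2 * Sw) * (wa i * z i))); last first.
  by move=> i _; ring.
rewrite big_split sumrB big_split /= -!mulr_sumr -/Sf -/Sl -/Sw; ring.
Qed.

Lemma QF_w (hp0' : p0 != 0) :
  let z := fun i => wa i - (p1 * wwa / (u * p0)) * yv i in
  \sum_(i < n) \sum_(j < n) Ga i j * z i * z j = p0 * wwa * Ba.
Proof.
move=> z; rewrite QF.
set c := p1 * wwa / (u * p0).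
have e1 : \sum_(i < n) fa i * z i = 0.
  rewrite (eq_bigr (fun i => fa i * wa i - c * (fa i * yv i))); last by move=> i _; rewrite /z /c; ring.
  by rewrite sumrB -mulr_sumr sum_fw sum_fy /c; field; rewrite ?hp0' ?hu.
have e2 : \sum_(i < n) z i * z i = wwa + c ^+ 2 * u ^+ 2.
  rewrite (eq_bigr (fun i => wa i * wa i - (2 * c) * (wa i * yv i) + c ^+ 2 * (yv i * yv i)));
    last by move=> i _; rewrite /z /c; ring.
  by rewrite big_split sumrB /= -!mulr_sumr sum_wy hyy -/wwa; ring.
have e3 : \sum_(i < n) (yv i / u) * z i = - c * u.
  rewrite (eq_bigr (fun i => u^-1 * (wa i * yv i) - (c / u) * (yv i * yv i)));
    last by move=> i _; rewrite /z /c; field; rewrite ?hp0' ?hu.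
  by rewrite sumrB -!mulr_sumr sum_wy hyy; field; rewrite ?hp0' ?hu.
have e4 : \sum_(i < n) wa i * z i = wwa.
  rewrite (eq_bigr (fun i => wa i * wa i - c * (wa i * yv i))); last by move=> i _; rewrite /z /c; ring.
  by rewrite sumrB -mulr_sumr sum_wy -/wwa; ring.
rewrite e1 e2 e3 e4 /Ba; ring.
Qed.

Lemma QF_e (v : 'I_n -> R) : (forall j, wa j = 0) -> \sum_(i < n) yv i * v i = 0 ->
  \sum_(i < n) \sum_(j < n) Ga i j * v i * v j = p0 * (p0 - s * p1) * \sum_(i < n) v i * v i.
Proof.
move=> w0 yv0; rewrite QF.
have e1 : \sum_(i < n) fa i * v i = 0.
  rewrite (eq_bigr (fun i => (p0 / u) * (yv i * v i))); last by move=> i _; rewrite /fa w0; field.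
  by rewrite -mulr_sumr yv0 mulr0.
have e3 : \sum_(i < n) (yv i / u) * v i = 0.
  rewrite (eq_bigr (fun i => u^-1 * (yv i * v i))); last by move=> i _; field.
  by rewrite -mulr_sumr yv0 mulr0.
have e4 : \sum_(i < n) wa i * v i = 0.
  by rewrite big1 // => i _; rewrite w0 mul0r.
rewrite e1 e3 e4; ring.
Qed.

Lemma wwaE : wwa = \sum_(j < n) xv j * xv j - s ^+ 2.
Proof.
rewrite /wwa (eq_bigr (fun j => xv j * xv j - (2 * s / u) * (xv j * yv j) + (s / u) ^+ 2 * (yv j * yv j)));
  last by move=> j _; rewrite /wa; field.
by rewrite big_split sumrB /= -!mulr_sumr hxy hyy; field.
Qed.

End Alg.

Unset Implicit Arguments. Set Strict Implicit.

Section Tool.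
Variables (R : realType) (V : normedModType R).
Implicit Types (f g : V -> R) (z v : V).

Lemma isdM f g z v df dg : is_derive z v f df -> is_derive z v g dg ->
  is_derive z v (fun t => f t * g t) (f z * dg + g z * df).
Proof. move=> H1 H2; exact: (@is_deriveM R V f g z v df dg H1 H2). Qed.
Lemma isdD f g z v df dg : is_derive z v f df -> is_derive z v g dg ->
  is_derive z v (fun t => f t + g t) (df + dg).
Proof. move=> H1 H2; exact: (@is_deriveD R V R f g z v df dg H1 H2). Qed.
Lemma isdB f g z v df dg : is_derive z v f df -> is_derive z v g dg ->
  is_derive z v (fun t => f t - g t) (df - dg).
Proof. move=> H1 H2; exact: (@is_deriveB R V R f g z v df dg H1 H2). Qed.
Lemma isdN f z v df : is_derive z v f df ->
  is_derive z v (fun t => - f t) (- df).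
Proof. move=> H1; exact: (@is_deriveN R V R f z v df H1). Qed.
Lemma isdC (c : R) z v : is_derive z v (fun _ => c) 0.
Proof. exact: (@is_derive_cst R V R c z v). Qed.
Lemma isdV f z v df : f z != 0 -> is_derive z v f df ->
  is_derive z v (fun t => (f t)^-1) (- df / f z ^+ 2).
Proof.
move=> fz H; apply: DeriveDef.
  by apply: derivableV => //; exact: ex_derive.
have d := @ex_derive _ _ _ _ _ _ _ H; rewrite deriveV //.
rewrite derive_val; change (- f z ^- 2 * df = - df / f z ^+ 2); by rewrite mulrC mulNr mulrN.
Qed.
End Tool.
Arguments isdM {R V f g z v df dg}.
Arguments isdD {R V f g z v df dg}.
Arguments isdB {R V f g z v df dg}.
Arguments isdC {R V}.
Arguments isdN {R V f z v df}.
Arguments isdV {R V f z v df}.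

Section Chain.
Variables (R : realType) (V : normedModType R).

Lemma isd_comp1 (g : R -> R) (h : V -> R) z v dg dh :
  is_derive (h z) 1 g dg -> differentiable h z -> is_derive z v h dh ->
  is_derive z v (fun t => g (h t)) (dg * dh).
Proof.
move=> Hg dhz Hh.
have dg' : differentiable g (h z) by apply/derivable1_diffP; exact: ex_derive.
have dc : differentiable (g \o h) z by exact: differentiable_comp.
apply: DeriveDef; first exact: diff_derivable.
rewrite (deriveE _ dc) diff_comp //= -(deriveE _ dhz) derive_val.
rewrite diff1E // derive1E derive_val.
by rewrite mulrC.
Qed.

Lemma isd_comp2 (g : R * R -> R) (c : R) (h : V -> R) z v dh :
  differentiable g (c, h z) -> differentiable h z -> is_derive z v h dh ->
  is_derive z v (fun t => g (c, h t)) ('D_((0:R), (1:R)) g (c, h z) * dh).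
Proof.
move=> dg dhz Hh.
have dp : differentiable (fun t => (c, h t)) z.
  by apply: differentiable_pair => //; exact: differentiable_cst.
have dc : differentiable (g \o (fun t => (c, h t))) z.
  exact: differentiable_comp.
apply: DeriveDef; first exact: diff_derivable.
rewrite (deriveE _ dc) diff_comp //= (@diff_pair _ _ _ _ (fun _ => c) h z (differentiable_cst c z) dhz).
rewrite diff_cst /= -(deriveE _ dhz) derive_val (deriveE _ dg).
have -> : ((0 : R), dh) = dh *: ((0:R), (1:R)).
  by apply/pair_equal_spec; split; rewrite /GRing.scale /= ?mulr0 ?mulr1. 
by rewrite linearZ /= mulrC.
Qed.
End Chain.
Arguments isd_comp1 {R V g h z v dg dh}.
Arguments isd_comp2 {R V g c h z v dh}.

Section Atoms.
Variables (R : realType) (n : nat).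
Local Notation V := 'rV[R]_n.

Lemma coord_linear (i : 'I_n) : exists f : {linear V -> R}, (fun t : V => t 0 i) = f.
Proof.
have @f : {linear V -> R}.
  by exists (fun N : V => N 0 i); do 2![eexists]; do ?[constructor];
     rewrite ?mxE// => ? *; rewrite ?mxE//; move=> ?; rewrite !mxE.
by exists f.
Qed.

Lemma isd_coord (z v : V) i : is_derive z v (fun t : V => t 0 i) (v 0 i).
Proof.
have [f ef] := coord_linear i.
have cf : continuous f by rewrite -ef; exact: coord_continuous.
have df : differentiable f z by exact: linear_differentiable.
rewrite ef; apply: DeriveDef; first exact: diff_derivable.
rewrite (deriveE _ df) diff_lin //. rewrite -ef. done.
Qed.

Lemma diff_coord (z : V) i : differentiable (fun t : V => t 0 i) z.
Proof. exact: differentiable_coord. Qed.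

Lemma edot_sum (c : V) : (fun t => edot c t) = \sum_(i < n) (fun t : V => c 0 i * t 0 i).
Proof. by rewrite fct_sumE; apply/funext => t. Qed.

Lemma isd_edot (c z v : V) : is_derive z v (fun t => edot c t) (edot c v).
Proof.
rewrite edot_sum /edot; apply: is_derive_sum => i.
have := isdM (isdC (c 0 i) z v) (isd_coord z v i).
by rewrite mulr0 addr0.
Qed.

Lemma diff_edot (c z : V) : differentiable (fun t => edot c t) z.
Proof.
rewrite edot_sum; apply: differentiable_sum => i.
apply: (@differentiableM _ _ (fun _ => c 0 i) (fun t : V => t 0 i)).
  exact: differentiable_cst.
exact: diff_coord.
Qed.

Lemma edot_sum2 : (fun t => edot t t) = \sum_(i < n) (fun t : V => t 0 i * t 0 i).
Proof. by rewrite fct_sumE; apply/funext => t. Qed.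

Lemma isd_edot2 (z v : V) : is_derive z v (fun t => edot t t) (2 * edot z v).
Proof.
rewrite edot_sum2; apply: is_derive_eq.
  by apply: is_derive_sum => i; apply: isdM; exact: isd_coord.
rewrite /edot big_distrr /=; apply: eq_bigr => i _; ring.
Qed.

Lemma diff_edot2 (z : V) : differentiable (fun t => edot t t) z.
Proof.
rewrite edot_sum2; apply: differentiable_sum => i.
by apply: (@differentiableM _ _ (fun t : V => t 0 i) (fun t : V => t 0 i)); exact: diff_coord.
Qed.
End Atoms.
Arguments isd_coord {R n}. Arguments diff_coord {R n}. Arguments isd_edot {R n}.
Arguments diff_edot {R n}. Arguments isd_edot2 {R n}. Arguments diff_edot2 {R n}.

Lemma sq_le_itv (R : realType) (s r : R) : 0 <= r -> s ^+ 2 <= r ^+ 2 -> (-r <= s) && (s <= r).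
Proof.
move=> r0 h; rewrite -ler_norml -(@ler_pXn2r _ 2) ?nnegrE ?normr_ge0 //.
by rewrite real_normK ?num_real.
Qed.
Lemma itv_sq_le (R : realType) (s r : R) : (-r <= s) && (s <= r) -> s ^+ 2 <= r ^+ 2.
Proof.
move=> /andP [h1 h2]; nra.
Qed.

Section Kappa.
Variables (R : realType) (phi : R * R -> R) (r : R).
Definition kap1 (t : R) := phi (r, t) - t * phi_s phi (r, t).
Hypothesis Hr : 0 < r.
Hypothesis Hd : forall t, -r <= t <= r ->
  differentiable phi (r, t) /\ differentiable (phi_s phi) (r, t).
Hypothesis Hpos0 : 0 < phi (r, 0).
Hypothesis Hend1 : 0 < kap1 r.
Hypothesis Hend2 : 0 < kap1 (- r).
Hypothesis Hbeta : forall t, -r < t < r ->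
  0 < kap1 t + (r ^+ 2 - t ^+ 2) * phi_ss phi (r, t).

Lemma isd_kap1 t : -r <= t <= r -> is_derive t 1 kap1 (- (t * phi_ss phi (r, t))).
Proof.
move=> ht; have [d0 d1] := Hd t ht.
have did : differentiable (fun u : R => u) t by apply/derivable1_diffP; exact: derivable_id.
have Hid : is_derive t (1:R) (fun u : R => u) 1 by exact: is_derive_id.
have H0 := isd_comp2 (h := fun u : R => u) d0 did Hid.
have H1 := isd_comp2 (h := fun u : R => u) d1 did Hid.
have H2 := isdB H0 (isdM Hid H1).
refine (is_derive_eq H2 _).
rewrite /phi_ss /phi_s /=; ring.
Qed.

Lemma kap1_pos t : -r <= t <= r -> 0 < kap1 t.
Proof.
have cont : {within `[-r, r], continuous kap1}.
  apply: continuous_in_subspaceT => u; rewrite inE /= in_itv /= => hu.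
  have [dd _] := isd_kap1 u hu.
  by apply: differentiable_continuous; apply/derivable1_diffP.
have lerr : -r <= r by apply: (@le_trans _ _ 0); [rewrite oppr_le0|]; exact: ltW.
have [c cin cmin] := EVT_min lerr cont.
suff hc : 0 < kap1 c.
  by move=> ht; apply: (lt_le_trans hc); apply: cmin; rewrite in_itv /=.
move: cin; rewrite in_itv /= => /andP [c1 c2].
have [->|cr] := eqVneq c r; first exact: Hend1.
have [->|cmr] := eqVneq c (-r); first exact: Hend2.
have [->|c0] := eqVneq c 0.
  by rewrite /kap1 mul0r subr0.
have cin : c \in `](-r), r[.
  rewrite in_itv /=; apply/andP; split; rewrite lt_def ?c1 ?c2 ?andbT.
    exact: cmr.
  by rewrite eq_sym.
have D0 : is_derive c 1 kap1 0.
  apply: (derive1_at_min lerr) => //.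
    move=> u; rewrite in_itv /= => /andP [u1 u2].
    have hu : -r <= u <= r by apply/andP; split; apply: ltW.
    exact: (@ex_derive _ _ _ _ _ _ _ (isd_kap1 u hu)).
  by move=> u; rewrite in_itv /= => /andP [u1 u2]; apply: cmin; rewrite in_itv /=; apply/andP; split; apply: ltW.
have hc : -r <= c <= r by apply/andP.
have Dc := isd_kap1 c hc.
have e : - (c * phi_ss phi (r, c)) = 0.
  by rewrite -(@derive_val _ _ _ _ _ _ _ Dc) (@derive_val _ _ _ _ _ _ _ D0).
have e2 : phi_ss phi (r, c) = 0.
  by move/eqP: e; rewrite oppr_eq0 mulf_eq0 (negbTE c0) /= => /eqP.
move: cin; rewrite in_itv /= => /Hbeta.
by rewrite e2 mulr0 addr0.
Qed.
End Kappa.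


Section Main.
Variables (R : realType) (n : nat) (x : 'rV[R]_n) (phi : R * R -> R) (W : set (R * R)).
Hypothesis HW : forall z : 'rV[R]_n, z != 0 -> W (enorm x, edot x z / enorm z).
Hypothesis Hsm : smooth_on W phi.
Local Notation V := 'rV[R]_n.

Definition rr := enorm x.
Definition UU (z : V) := enorm z.
Definition SS (z : V) := edot x z / enorm z.
Definition P0 (z : V) := phi (rr, SS z).
Definition P1 (z : V) := phi_s phi (rr, SS z).
Definition P2 (z : V) := phi_ss phi (rr, SS z).
Definition P3 (z : V) := phi_sss phi (rr, SS z).
Definition dl (i j : 'I_n) : R := (i == j)%:R.

Lemma edot_gt0 {z : V} : z != 0 -> 0 < edot z z.
Proof.
move=> z0; rewrite lt_def; apply/andP; split; last first.
  by apply: sumr_ge0 => i _; exact: sqr_ge0.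
apply: contra z0 => /eqP /psumr_eq0P H.
apply/eqP/matrixP => i j; rewrite (ord1 i) mxE.
have := H (fun k _ => sqr_ge0 (z 0 k)) j isT; rewrite -expr2 => /eqP.
by rewrite sqrf_eq0 => /eqP.
Qed.

Lemma UU_gt0 {z : V} : z != 0 -> 0 < UU z.
Proof. by move=> z0; rewrite /UU /enorm sqrtr_gt0 edot_gt0. Qed.

Lemma UU_neq0 {z : V} : z != 0 -> UU z != 0.
Proof. by move=> z0; rewrite gt_eqF // UU_gt0. Qed.

Lemma diff_UU {z : V} : z != 0 -> differentiable UU z.
Proof.
move=> z0.
have q0 := edot_gt0 z0.
have ds : differentiable (@Num.sqrt R) (edot z z).
  by apply/derivable1_diffP; exact: (@ex_derive _ _ _ _ _ _ _ (is_derive1_sqrt q0)).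
have H := (@differentiable_comp _ _ _ _ (fun t : V => edot t t) Num.sqrt z (diff_edot2 z) ds).
exact H.
Qed.

Lemma isd_UU (z v : V) : z != 0 -> is_derive z v UU (edot z v / UU z).
Proof.
move=> z0.
have q0 := edot_gt0 z0.
have := @isd_comp1 _ _ _ (fun t : V => edot t t) z v _ _ (is_derive1_sqrt q0) (diff_edot2 z) (isd_edot2 z v).
rewrite /UU /enorm => H.
have := sqrtr_gt0 (edot z z); rewrite q0 => /gt_eqF /negbT s0.
suff -> : edot z v / Num.sqrt (edot z z) = (2 * Num.sqrt (edot z z))^-1 * (2 * edot z v) by exact H.
by field; rewrite s0.
Qed.


Lemma diff_SS {z : V} : z != 0 -> differentiable SS z.
Proof.
move=> z0.
have H := @differentiableM _ _ (fun t => edot x t) (fun t => (UU t)^-1) z (diff_edot x z)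
  (differentiableV (diff_UU z0) (UU_neq0 z0)).
exact H.
Qed.

Lemma isd_SS (z v : V) : z != 0 ->
  is_derive z v SS ((edot x v - SS z * (edot z v / UU z)) / UU z).
Proof.
move=> z0.
have H := isdM (isd_edot x z v) (isdV (UU_neq0 z0) (isd_UU z v z0)).
have u0 := UU_neq0 z0.
suff -> : (edot x v - SS z * (edot z v / UU z)) / UU z =
   edot x z * (- (edot z v / UU z) / UU z ^+ 2) + (UU z)^-1 * edot x v by exact H.
rewrite /SS -/(UU z); by field.
Qed.

Lemma diff_phis {p : R * R} : W p ->
  [/\ differentiable phi p, differentiable (phi_s phi) p & differentiable (phi_ss phi) p].
Proof.
move=> Wp; split.
- exact: (Hsm [::] p Wp).
- exact: (Hsm [:: ((0:R), (1:R))] p Wp).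
- exact: (Hsm [:: ((0:R), (1:R)); ((0:R), (1:R))] p Wp).
Qed.

Lemma isd_Pg (g : R * R -> R) (z v : V) : z != 0 -> differentiable g (rr, SS z) ->
  is_derive z v (fun t => g (rr, SS t))
   ('D_((0:R), (1:R)) g (rr, SS z) * ((edot x v - SS z * (edot z v / UU z)) / UU z)).
Proof.
move=> z0 dg.
have H := (isd_comp2 dg (diff_SS z0) (isd_SS z v z0)); exact H.
Qed.

Lemma W_SS {z : V} : z != 0 -> W (rr, SS z).
Proof. exact: HW. Qed.

Lemma isd_P0 (z v : V) : z != 0 ->
  is_derive z v P0 (P1 z * ((edot x v - SS z * (edot z v / UU z)) / UU z)).
Proof. move=> z0; have [d0 d1 d2] := diff_phis (W_SS z0); exact: isd_Pg. Qed.
Lemma isd_P1 (z v : V) : z != 0 ->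
  is_derive z v P1 (P2 z * ((edot x v - SS z * (edot z v / UU z)) / UU z)).
Proof. move=> z0; have [d0 d1 d2] := diff_phis (W_SS z0); exact: isd_Pg. Qed.
Lemma isd_P2 (z v : V) : z != 0 ->
  is_derive z v P2 (P3 z * ((edot x v - SS z * (edot z v / UU z)) / UU z)).
Proof. move=> z0; have [d0 d1 d2] := diff_phis (W_SS z0); exact: isd_Pg. Qed.

Lemma edot_eb (c : V) k : edot c (ebasis R k) = c 0 k.
Proof.
rewrite /edot (bigD1 k) //= big1 ?addr0; first by rewrite mxE eqxx mulr1.
by move=> j jk; rewrite mxE eq_sym (negbTE jk) mulr0.
Qed.

Lemma near_neq0 (z : V) : z != 0 -> \forall t \near z, t != 0.
Proof.
move=> z0; apply/nbhs_normP; exists `|z|; first by rewrite /= normr_gt0.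
move=> t /=; apply: contraTN => /eqP ->; by rewrite subr0 ltxx.
Qed.

Definition dS (z : V) k := (x 0 k - SS z * (z 0 k / UU z)) / UU z.

Lemma dk_coord (z : V) k i : is_derive z (ebasis R k) (fun t : V => t 0 i) (dl i k).
Proof.
have H := isd_coord z (ebasis R k) i.
by rewrite /ebasis mxE eq_sym in H.
Qed.
Lemma dk_UU (z : V) k : z != 0 -> is_derive z (ebasis R k) UU (z 0 k / UU z).
Proof. by move=> z0; rewrite -edot_eb; exact: isd_UU. Qed.
Lemma dk_invUU (z : V) k : z != 0 ->
  is_derive z (ebasis R k) (fun t => (UU t)^-1) (- (z 0 k / UU z) / UU z ^+ 2).
Proof. by move=> z0; apply: isdV; [exact: UU_neq0|exact: dk_UU]. Qed.
Lemma dk_SS (z : V) k : z != 0 -> is_derive z (ebasis R k) SS (dS z k).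
Proof. by move=> z0; rewrite /dS -(edot_eb x) -(edot_eb z); exact: isd_SS. Qed.
Lemma dk_P0 (z : V) k : z != 0 -> is_derive z (ebasis R k) P0 (P1 z * dS z k).
Proof. by move=> z0; rewrite /dS -(edot_eb x) -(edot_eb z); exact: isd_P0. Qed.
Lemma dk_P1 (z : V) k : z != 0 -> is_derive z (ebasis R k) P1 (P2 z * dS z k).
Proof. by move=> z0; rewrite /dS -(edot_eb x) -(edot_eb z); exact: isd_P1. Qed.
Lemma dk_P2 (z : V) k : z != 0 -> is_derive z (ebasis R k) P2 (P3 z * dS z k).
Proof. by move=> z0; rewrite /dS -(edot_eb x) -(edot_eb z); exact: isd_P2. Qed.

Ltac dstep z0 := first
  [ apply: isdC
  | apply: dk_coord
  | apply: (dk_UU _ _ z0)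
  | apply: (dk_invUU _ _ z0)
  | apply: (dk_SS _ _ z0)
  | apply: (dk_P0 _ _ z0)
  | apply: (dk_P1 _ _ z0)
  | apply: (dk_P2 _ _ z0)
  | apply: isdM
  | apply: isdD
  | apply: isdB
  | apply: isdN ].
Ltac dtac z0 := repeat (dstep z0).

Definition F1 i (z : V) := P0 z * (z 0 i / UU z) + P1 z * (x 0 i - SS z * (z 0 i / UU z)).

Lemma dk_F (z : V) k : z != 0 -> is_derive z (ebasis R k) (fun t => UU t * P0 t) (F1 k z).
Proof.
move=> z0; apply: is_derive_eq.
  dtac z0.
rewrite /F1 /dS; have u0 := UU_neq0 z0; by field.
Qed.

Definition mm i j (z : V) := dl i j - (z 0 i / UU z) * (z 0 j / UU z).
Definition wv i (z : V) := x 0 i - SS z * (z 0 i / UU z).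
Definition F2 i j (z : V) :=
  ((P0 z - SS z * P1 z) * mm i j z + P2 z * (wv i z * wv j z)) / UU z.
Definition Fund i j (z : V) := F1 i z * F1 j z + (UU z * P0 z) * F2 i j z.
Definition Aa (z : V) := (P0 z - SS z * P1 z) * P1 z - SS z * P0 z * P2 z.
Definition Gg (z : V) := 3 * P1 z * P2 z + P0 z * P3 z.
Definition Cf i j k (z : V) :=
  (Aa z * (mm i j z * wv k z + mm j k z * wv i z + mm i k z * wv j z)
   + Gg z * (wv i z * wv j z * wv k z)) / (2 * UU z).

Lemma dk_F1 (z : V) i k : z != 0 -> is_derive z (ebasis R k) (F1 i) (F2 i k z).
Proof.
move=> z0; apply: is_derive_eq.
  rewrite /F1; dtac z0.
rewrite /F2 /mm /wv /dS; have u0 := UU_neq0 z0; by field.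
Qed.

Lemma dk_Fund (z : V) i j k : z != 0 ->
  is_derive z (ebasis R k) (Fund i j) (2 * Cf i j k z).
Proof.
move=> z0; apply: is_derive_eq.
  rewrite /Fund /F1 /F2 /mm /wv; dtac z0.
rewrite /Cf /Aa /Gg /mm /wv /dS; have u0 := UU_neq0 z0; by field.
Qed.

Local Notation FF := (sph_metric phi x).

Lemma FF_E (z : V) : FF z = UU z * P0 z.
Proof. by []. Qed.

Lemma pdF (z : V) i : z != 0 -> pd FF i z = F1 i z.
Proof. move=> z0; exact (@derive_val _ _ _ _ _ _ _ (dk_F z i z0)). Qed.

Lemma isd_F2 (z : V) i : z != 0 -> is_derive z (ebasis R i) (fun w => FF w ^+ 2)
   (2 * (UU z * P0 z) * F1 i z).
Proof.
move=> z0; apply: is_derive_eq.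
  exact: (isdM (dk_F z i z0) (dk_F z i z0)).
rewrite /GRing.scale /=. ring.
Qed.

Lemma pdF2 (z : V) i : z != 0 -> pd (fun w => FF w ^+ 2) i z = 2 * (UU z * P0 z) * F1 i z.
Proof. move=> z0; exact (@derive_val _ _ _ _ _ _ _ (isd_F2 z i z0)). Qed.

Lemma fundE (z : V) i j : z != 0 -> fund (sph_metric phi) x z i j = Fund i j z.
Proof.
move=> z0; rewrite /fund.
have -> : pd (fun z' => pd (fun w => FF w ^+ 2) i z') j z =
          pd (fun t => 2 * (UU t * P0 t) * F1 i t) j z.
  rewrite /pd; apply: near_eq_derive.
  by near=> t; apply: pdF2; near: t; exact: near_neq0.
have H : is_derive z (ebasis R j) (fun t => 2 * (UU t * P0 t) * F1 i t) (2 * Fund i j z).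
  have H1 := isdM (isdC 2 z (ebasis R j)) (dk_F z j z0).
  have H2 := isdM H1 (dk_F1 z i j z0).
  refine (is_derive_eq H2 _).
  rewrite /Fund /=; ring.
rewrite /pd (@derive_val _ _ _ _ _ _ _ H).
by rewrite mulrA mulVf ?mul1r // pnatr_eq0.
Unshelve. all: by end_near. Qed.

Lemma cartanE (z : V) i j k : z != 0 -> cartan (sph_metric phi) x z i j k = Cf i j k z.
Proof.
move=> z0; rewrite /cartan.
have -> : pd (fun z' => fund (sph_metric phi) x z' i j) k z = pd (Fund i j) k z.
  rewrite /pd; apply: near_eq_derive.
  by near=> t; apply: fundE; near: t; exact: near_neq0.
rewrite /pd (@derive_val _ _ _ _ _ _ _ (dk_Fund z i j k z0)).
by rewrite mulrA mulVf ?mul1r // pnatr_eq0.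
Unshelve. all: by end_near. Qed.

Lemma angularE (z : V) i j : z != 0 -> angular (sph_metric phi) x z i j = (UU z * P0 z) * F2 i j z.
Proof.
move=> z0; rewrite /angular fundE // !pdF // /Fund; ring.
Qed.


Hypothesis HF : forall z : V, z != 0 -> 0 < sph_metric phi x z.
Hypothesis HPD : forall (z v : V), z != 0 -> v != 0 ->
  0 < \sum_(i < n) \sum_(j < n) fund (sph_metric phi) x z i j * v 0 i * v 0 j.

Lemma edot_ge0 (z : V) : 0 <= edot z z.
Proof. by apply: sumr_ge0 => i _; exact: sqr_ge0. Qed.

Lemma hyyz (z : V) : \sum_(j < n) z 0 j * z 0 j = UU z ^+ 2.
Proof. by rewrite /UU /enorm sqr_sqrtr // edot_ge0. Qed.

Lemma hxyz {z : V} : z != 0 -> \sum_(j < n) x 0 j * z 0 j = SS z * UU z.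
Proof. by move=> z0; rewrite /SS /UU mulfVK // -/(UU z) UU_neq0. Qed.

Lemma P0_pos {z : V} : z != 0 -> 0 < P0 z.
Proof.
move=> z0; have := HF z z0; rewrite FF_E.
by rewrite pmulr_rgt0 // UU_gt0.
Qed.

Lemma PD_Ga {z : V} {f : 'I_n -> R} : z != 0 -> (exists i, f i != 0) ->
  0 < \sum_(i < n) \sum_(j < n) Ga (fun j => z 0 j) (fun j => x 0 j) (UU z) (SS z) (P0 z) (P1 z) (P2 z) i j * f i * f j.
Proof.
move=> z0 [i0 fi0].
have v0 : (\row_i f i : V) != 0.
  apply: contraNneq fi0 => /matrixP /(_ 0 i0); rewrite !mxE => ->; by [].
have := HPD z (\row_i f i) z0 v0.
congr (0 < _); apply: eq_bigr => i _; apply: eq_bigr => j _.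
by rewrite fundE // !mxE.
Qed.

Local Notation yvz z := (fun j : 'I_n => z 0 j).
Local Notation xvv := (fun j : 'I_n => x 0 j).

Lemma wwa_ge0 (z : V) : 0 <= wwa (yvz z) xvv (UU z) (SS z).
Proof. by apply: sumr_ge0 => i _; rewrite -expr2 sqr_ge0. Qed.

Lemma Ba_pos (z : V) : z != 0 -> wwa (yvz z) xvv (UU z) (SS z) != 0 ->
  0 < Ba (yvz z) xvv (UU z) (SS z) (P0 z) (P1 z) (P2 z).
Proof.
move=> z0 hw.
have hu := UU_neq0 z0; have hp := P0_pos z0.
have Q := QF_w (P1 z) (P2 z) hu (hyyz z) (hxyz z0) (lt0r_neq0 hp); simpl in Q.
set c := P1 z * wwa (yvz z) xvv (UU z) (SS z) / (UU z * P0 z) in Q.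
set f := (fun i => wa (yvz z) xvv (UU z) (SS z) i - c * z 0 i) in Q.
have ex : exists i, f i != 0.
  case: (boolP [exists i, f i != 0]) => [/existsP //|].
  rewrite negb_exists => /forallP H0; exfalso; move: hw => /eqP; apply.
  have e : \sum_(i < n) f i * wa (yvz z) xvv (UU z) (SS z) i = 0.
    by rewrite big1 // => i _; have := H0 i; rewrite negbK => /eqP ->; rewrite mul0r.
  rewrite -e (eq_bigr (fun i => wa (yvz z) xvv (UU z) (SS z) i * wa (yvz z) xvv (UU z) (SS z) i
     - c * (wa (yvz z) xvv (UU z) (SS z) i * z 0 i))); last by move=> i _; rewrite /f; ring.
  by rewrite sumrB -mulr_sumr (sum_wy hu (hyyz z) (hxyz z0)) mulr0 subr0.
have := PD_Ga z0 ex; rewrite Q.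
have w0 : 0 < wwa (yvz z) xvv (UU z) (SS z) by rewrite lt_def hw wwa_ge0.
by rewrite pmulr_rgt0 // mulr_gt0.
Qed.

Lemma kend (z : V) (f : 'I_n -> R) : z != 0 -> (forall j, wa (yvz z) xvv (UU z) (SS z) j = 0) ->
  \sum_(i < n) z 0 i * f i = 0 -> (exists i, f i != 0) -> 0 < P0 z - SS z * P1 z.
Proof.
move=> z0 w0 zf ex.
have hu := UU_neq0 z0; have hp := P0_pos z0.
have := PD_Ga z0 ex; rewrite (QF_e (P0 z) (P1 z) (P2 z) hu w0 zf).
have ff : 0 < \sum_(i < n) f i * f i.
  case: ex => i fi; rewrite (bigD1 i) //=.
  have pos : 0 < f i * f i by rewrite lt_def mulf_neq0 //= -expr2 sqr_ge0.
  apply: (lt_le_trans pos); rewrite lerDl.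
  by apply: sumr_ge0 => j _; rewrite -expr2 sqr_ge0.
by rewrite (pmulr_lgt0 _ ff) pmulr_rgt0.
Qed.

Lemma edotC (a b : V) : edot a b = edot b a.
Proof. by apply: eq_bigr => i _; rewrite mulrC. Qed.

Lemma edotDZr (c p q : V) (a b : R) : edot c (a *: p + b *: q) = a * edot c p + b * edot c q.
Proof.
rewrite /edot (eq_bigr (fun i => a * (c 0 i * p 0 i) + b * (c 0 i * q 0 i))).
  by rewrite big_split /= -!mulr_sumr.
by move=> i _; rewrite !mxE; ring.
Qed.

Lemma edot_sq (p q : V) (a b : R) : edot (a *: p + b *: q) (a *: p + b *: q) =
  a ^+ 2 * edot p p + 2 * a * b * edot p q + b ^+ 2 * edot q q.
Proof.
rewrite edotDZr edotC edotDZr (edotC (a *: p + b *: q)) edotDZr (edotC q p); ring.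
Qed.

Lemma sum_sq0 {f : 'I_n -> R} : \sum_(i < n) f i * f i = 0 -> forall i, f i = 0.
Proof.
move=> /eqP; rewrite psumr_eq0; last by move=> j _; rewrite -expr2 sqr_ge0.
move=> /allP H j; have := H j (mem_index_enum j); rewrite implyTb mulf_eq0 orbb.
by move/eqP.
Qed.

Lemma k_pos (y : V) : y != 0 -> wwa (yvz y) xvv (UU y) (SS y) != 0 -> 0 < P0 y - SS y * P1 y.
Proof.
move=> y0 hw.
have hu := UU_neq0 y0.
have wE := wwaE hu (hyyz y) (hxyz y0).
have r2 : rr ^+ 2 = edot x x by rewrite /rr /enorm sqr_sqrtr // edot_ge0.
have xx0 : edot x x != 0.
  apply: contra hw => /eqP xx0.
  have x0 := sum_sq0 xx0.
  have : SS y * UU y = 0 by rewrite -(hxyz y0) big1 // => j _; rewrite x0 mul0r.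
  move/eqP; rewrite mulf_eq0 (negbTE hu) orbF => /eqP s0.
  by rewrite wE s0 expr0n /= subr0; apply/eqP; exact: xx0.
have rpos : 0 < rr by rewrite /rr /enorm sqrtr_gt0 lt_def xx0 edot_ge0.
set b := edot x y / edot x x.
set e : V := 1 *: y + (- b) *: x.
have xe : edot x e = 0 by rewrite /e edotDZr /b edotC; field; rewrite ?xx0.
have ee : edot e e = UU y ^+ 2 * wwa (yvz y) xvv (UU y) (SS y) / rr ^+ 2.
  rewrite /e edot_sq wE /b r2 -(hyyz y).
  have -> : edot y y = \sum_(j < n) y 0 j * y 0 j by [].
  rewrite (edotC y x).
  have -> : edot x y = SS y * UU y by rewrite -(hxyz y0).
  have -> : \sum_(j < n) x 0 j * x 0 j = edot x x by [].
  rewrite (hyyz y); field; rewrite ?xx0 ?hu //.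
have ee0 : 0 < edot e e.
  rewrite ee; apply: divr_gt0; last by rewrite exprn_gt0.
  by rewrite mulr_gt0 ?exprn_gt0 ?UU_gt0 // lt_def hw wwa_ge0.
set e' : V := (rr / enorm e) *: e.
have ne : enorm e ^+ 2 = edot e e by rewrite /enorm sqr_sqrtr // edot_ge0.
have ne0 : enorm e != 0 by rewrite /enorm gt_eqF // sqrtr_gt0.
have e'e' : edot e' e' = rr ^+ 2.
  rewrite /e' -[X in edot X _]addr0 -[X in edot _ X]addr0 -(scale0r e) edot_sq.
  rewrite -ne; field; rewrite ?ne0 //.
have xe' : edot x e' = 0.
  by rewrite /e' -[X in edot _ X]addr0 -(scale0r e) edotDZr xe; ring.
have r20 : rr ^+ 2 != 0 by rewrite expf_neq0 // gt_eqF.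
pose ypt (t : R) : V := t *: x + Num.sqrt (rr ^+ 2 - t ^+ 2) *: e'.
have yptP : forall t, t ^+ 2 <= rr ^+ 2 ->
   [/\ ypt t != 0, SS (ypt t) = t & wwa (yvz (ypt t)) xvv (UU (ypt t)) (SS (ypt t)) = rr ^+ 2 - t ^+ 2].
  move=> t ht.
  have q2 : Num.sqrt (rr ^+ 2 - t ^+ 2) ^+ 2 = rr ^+ 2 - t ^+ 2 by rewrite sqr_sqrtr // subr_ge0.
  have E1 : edot (ypt t) (ypt t) = (rr ^+ 2) ^+ 2.
    rewrite /ypt edot_sq xe' e'e' q2 -r2; ring.
  have E2 : edot x (ypt t) = t * rr ^+ 2 by rewrite /ypt edotDZr xe' -r2; ring.
  have U2 : UU (ypt t) = rr ^+ 2.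
    by rewrite /UU /enorm E1 sqrtr_sqr ger0_norm // exprn_ge0 // ltW.
  have nz : ypt t != 0.
    apply/negP => /eqP H; move: E1; rewrite H.
    have -> : edot (0 : V) 0 = 0 by rewrite /edot big1 // => i _; rewrite mxE mul0r.
    by move/eqP; rewrite eq_sym expf_eq0 (negbTE r20) andbF.
  have S2 : SS (ypt t) = t by rewrite /SS E2 -/(UU (ypt t)) U2 mulfK.
  split => //.
  have hu' := UU_neq0 nz.
  by rewrite (wwaE hu' (hyyz (ypt t)) (hxyz nz)) S2 r2.
have hs : -rr <= SS y <= rr.
  apply: sq_le_itv; first exact: ltW.
  by rewrite -subr_ge0 r2 -wE wwa_ge0.
have Hd : forall t, -rr <= t <= rr -> differentiable phi (rr, t) /\ differentiable (phi_s phi) (rr, t).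
  move=> t ht.
  have ht2 : t ^+ 2 <= rr ^+ 2 by exact: itv_sq_le.
  have [nz S2 _] := yptP t ht2.
  have [d0 d1 _] := diff_phis (W_SS nz); rewrite S2 in d0 d1; by split.
have Hpos0 : 0 < phi (rr, 0).
  have h0 : (0 : R) ^+ 2 <= rr ^+ 2 by rewrite expr0n /= exprn_ge0 // ltW.
  have [nz S2 _] := yptP 0 h0.
  by have := P0_pos nz; rewrite /P0 S2.
have endk : forall t, t ^+ 2 = rr ^+ 2 -> 0 < kap1 R phi rr t.
  move=> t ht.
  have hle : t ^+ 2 <= rr ^+ 2 by rewrite ht.
  have [nz S2 W2] := yptP t hle.
  rewrite ht subrr in W2.
  have w0 := wwa0 W2.
  have e'0 : exists i, e' 0 i != 0.
    case: (boolP [exists i, e' 0 i != 0]) => [/existsP //|].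
    rewrite negb_exists => /forallP H0; exfalso; move: r20 => /eqP; apply.
    rewrite -e'e' /edot big1 // => i _; have := H0 i; rewrite negbK => /eqP ->; by rewrite mul0r.
  have zf : \sum_(i < n) ypt t 0 i * e' 0 i = 0.
    have -> : \sum_(i < n) ypt t 0 i * e' 0 i = edot e' (ypt t) by rewrite edotC.
    by rewrite /ypt edotDZr edotC xe' ht subrr sqrtr0; ring.
  have := kend (ypt t) (fun i => e' 0 i) nz w0 zf e'0.
  by rewrite /P0 /P1 S2.
have Hend1 : 0 < kap1 R phi rr rr by apply: endk.
have Hend2 : 0 < kap1 R phi rr (- rr) by apply: endk; rewrite sqrrN.
have Hbeta : forall t, -rr < t < rr ->
    0 < kap1 R phi rr t + (rr ^+ 2 - t ^+ 2) * phi_ss phi (rr, t).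
  move=> t /andP [t1 t2].
  have ht : t ^+ 2 < rr ^+ 2 by nra.
  have [nz S2 W2] := yptP t (ltW ht).
  have hw' : wwa (yvz (ypt t)) xvv (UU (ypt t)) (SS (ypt t)) != 0.
    by rewrite W2 subr_eq0 gt_eqF.
  have := Ba_pos (ypt t) nz hw'.
  by rewrite /Ba W2 /P0 /P1 /P2 S2.
exact: (@kap1_pos R phi rr rpos Hd Hpos0 Hend1 Hend2 Hbeta (SS y) hs).
Qed.

Lemma main_sec (y : V) (i j k : 'I_n) : y != 0 ->
  mean_cartan_norm2 (sph_metric phi) x y != 0 ->
  cartan (sph_metric phi) x y i j k =
      coefP n phi rr (SS y) / n.+1%:R *
        (angular (sph_metric phi) x y i j * mean_cartan (sph_metric phi) x y k
         + angular (sph_metric phi) x y j k * mean_cartan (sph_metric phi) x y i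
         + angular (sph_metric phi) x y k i * mean_cartan (sph_metric phi) x y j)
      + coefQ n phi rr (SS y) / mean_cartan_norm2 (sph_metric phi) x y *
        (mean_cartan (sph_metric phi) x y i * mean_cartan (sph_metric phi) x y j
         * mean_cartan (sph_metric phi) x y k).
Proof.
move=> y0 hn.
have hu := UU_neq0 y0.
have hyy := hyyz y.
have hxy := hxyz y0.
have hp0 := lt0r_neq0 (P0_pos y0).
have EM : (\matrix_(i0 < n, j0 < n) fund (sph_metric phi) x y i0 j0) =
          GM (yvz y) xvv (UU y) (SS y) (P0 y) (P1 y) (P2 y).
  by apply/matrixP => a b; rewrite !mxE fundE.
have HG : GM (yvz y) xvv (UU y) (SS y) (P0 y) (P1 y) (P2 y) \in unitmx.
  rewrite unitmxE unitfE; apply/negP => /det0P [v v0 vM].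
  have ex : exists a, v 0 a != 0.
    case: (boolP [exists a, v 0 a != 0]) => [/existsP //|].
    rewrite negb_exists => /forallP H0; exfalso; move/eqP: v0; apply.
    by apply/matrixP => a b; rewrite (ord1 a) mxE; have := H0 b; rewrite negbK => /eqP.
  have := PD_Ga (f := fun a => v 0 a) y0 ex.
  suff -> : \sum_(a < n) \sum_(b < n) Ga (yvz y) xvv (UU y) (SS y) (P0 y) (P1 y) (P2 y) a b * v 0 a * v 0 b = 0
    by rewrite ltxx.
  rewrite exchange_big /= big1 // => b _.
  have hb := vM; move/matrixP: hb => /(_ 0 b); rewrite !mxE => hb.
  rewrite (eq_bigr (fun a => (v 0 a * GM (yvz y) xvv (UU y) (SS y) (P0 y) (P1 y) (P2 y) a b) * v 0 b)).
    by rewrite -mulr_suml hb mul0r.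
  by move=> a _; rewrite /GM mxE; ring.
have EN : fund_inv (sph_metric phi) x y = NM (yvz y) xvv (UU y) (SS y) (P0 y) (P1 y) (P2 y).
  by rewrite /fund_inv EM.
have EI : forall a, mean_cartan (sph_metric phi) x y a =
    Iv (yvz y) xvv (UU y) (SS y) (P0 y) (P1 y) (P2 y) (P3 y) a.
  move=> a; rewrite /mean_cartan EN; apply: eq_bigr => b _; apply: eq_bigr => c _.
  by rewrite cartanE.
have E2 : mean_cartan_norm2 (sph_metric phi) x y =
    norm2 (yvz y) xvv (UU y) (SS y) (P0 y) (P1 y) (P2 y) (P3 y).
  rewrite /mean_cartan_norm2 EN; apply: eq_bigr => a _; apply: eq_bigr => b _.
  by rewrite !EI.
have hn2 : norm2 (yvz y) xvv (UU y) (SS y) (P0 y) (P1 y) (P2 y) (P3 y) != 0 by rewrite -E2.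
have hw : wwa (yvz y) xvv (UU y) (SS y) != 0.
  apply: contra hn2 => /eqP w0; apply/eqP.
  exact: (wa0_norm2 (P0 y) (P1 y) (P2 y) (P3 y) (wwa0 w0)).
have hB := lt0r_neq0 (Ba_pos y y0 hw).
have hk := lt0r_neq0 (k_pos y y0 hw).
have FI := final_id hu hyy hxy HG hp0 hB hk hn2 i j k.
have r2 : rr ^+ 2 = edot x x by rewrite /rr /enorm sqr_sqrtr // edot_ge0.
have wr : wwa (yvz y) xvv (UU y) (SS y) = rr ^+ 2 - SS y ^+ 2.
  by rewrite (wwaE hu hyy hxy) r2.
have eB : Defs.coefB phi rr (SS y) = Ba (yvz y) xvv (UU y) (SS y) (P0 y) (P1 y) (P2 y).
  by rewrite /Defs.coefB /Ba wr.
rewrite E2 !EI cartanE // !angularE //.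
rewrite /coefP /coefQ eB -wr.
exact: FI.
Qed.

End Main.


Theorem corollary2 (R : realType) (n : nat) (U : set 'rV[R]_n)
  (phi : R * R -> R) (W : set (R * R)) :
  open U -> connected U -> U !=set0 ->
  open W ->
  (forall x y, U x -> y != 0 -> W (enorm x, edot x y / enorm y)) ->
  smooth_on W phi ->
  finsler_on (sph_metric phi) U ->
  forall (x y : 'rV[R]_n), U x -> y != 0 ->
  mean_cartan_norm2 (sph_metric phi) x y != 0 ->
  let F := sph_metric phi in
  let r := enorm x in
  let s := edot x y / enorm y in
  let I := mean_cartan F x y in
  forall i j k : 'I_n,
    cartan F x y i j k =
      coefP n phi r s / n.+1%:R *
        (angular F x y i j * I k + angular F x y j k * I i
         + angular F x y k i * I j)
      + coefQ n phi r s / mean_cartan_norm2 F x y * (I i * I j * I k).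
Proof.
move=> _ _ _ _ HW0 Hsm [_ [Hpos [_ HPD0]]] x y Ux y0 hn F r s I i j k.
have HW : forall z : 'rV[R]_n, z != 0 -> W (enorm x, edot x z / enorm z).
  by move=> z z0; exact: HW0.
have HF : forall z : 'rV[R]_n, z != 0 -> 0 < sph_metric phi x z.
  by move=> z z0; exact: Hpos.
have HPD : forall (z v : 'rV[R]_n), z != 0 -> v != 0 ->
    0 < \sum_(i < n) \sum_(j < n) fund (sph_metric phi) x z i j * v 0 i * v 0 j.
  by move=> z v z0 v0; exact: HPD0.
exact: (@main_sec R n x phi W HW Hsm HF HPD y i j k y0 hn).
Qed.
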